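(* Let $\ell, d, h \in \mathbb{N}$ and let $k$ be an odd positive integer, and set $R(d) = \lfloor k/2 \rfloor \cdot d$. Let $f: \mathbb{R}^{\ell} \to \mathbb{R}^{\ell}$ be a normalization-free one-dimensional convolutional neural network of depth $d$ with ReLU nonlinearity, i.e. $$\mathbf{z}^{(1)} = C_{in}(\mathbf{x}), \qquad \mathbf{z}^{(i)} = \sigma\big(C_i(\mathbf{z}^{(i-1)})\big) \ \ \forall i \in \{2,\dots,d\}, \qquad f(\mathbf{x}) = C_{out}\big(\mathbf{z}^{(d-1)}\big),$$ where $\sigma$ is the (elementwise) ReLU, and $C_{in}, C_i, C_{out}$ are arbitrary bias-enabled one-dimensional convolutional layers with kernel size $k$, zero-padding of width $\lfloor k/2 \rfloor$ on each side, unit stride and no dilation (so each maps length-$\ell$ sequences to length-$\ell$ sequences), with channel dimensions $1 \to h$ for $C_{in}$, $h \to h$ for each $C_i$, and $h \to 1$ for $C_{out}$. Assume $R(d) < \frac{\ell}{2} - 2$. Then $f$ does not localize any index $i^* \in \{R(d)+1, R(d)+2, \dots, \ell - R(d) - 1\}$, in the following sense: for every such $i^*$ there exists $j \in \{1,\dots,\ell\} \setminus \{i^*\}$ with $\mathbb{E}_{X \sim P_{f_{i^*}}}[X] = \mathbb{E}_{X \sim P_{f_j}}[X]$.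
   Context: For $f: \mathbb{R}^{\ell} \to \mathbb{R}^{\ell}$ and $i \in \{1,\dots,\ell\}$, $f_i: \mathbb{R}^{\ell} \to \mathbb{R}$ denotes the $i$-th output coordinate of $f$, and $P_{f_i}$ denotes the distribution of $f_i(\mathbf{x})$ when $\mathbf{x} \sim \mathcal{N}(\mathbf{0}_{\ell}, I_{\ell})$ (the pushforward of the standard Gaussian on $\mathbb{R}^{\ell}$ under $f_i$). The function $f$ is said to localize an index $i^* \in \{1,\dots,\ell\}$ if $\mathbb{E}_{X \sim P_{f_{i^*}}}[X] \neq \mathbb{E}_{X \sim P_{f_j}}[X]$ for all $j \in \{1,\dots,\ell\} \setminus \{i^*\}$. *)

(* Defs.v *)
From HB Require Import structures.
From mathcomp Require Import all_boot all_order all_algebra.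
From mathcomp Require Import all_classical all_reals all_analysis.
Set Implicit Arguments. Unset Strict Implicit. Unset Printing Implicit Defensive.
Import Order.TTheory GRing.Theory Num.Theory.
Local Open Scope ring_scope.

Section CNN.
Variables (R : realType) (ell k : nat).

(* Positions are 0-based naturals; only positions 0 .. ell-1 are meaningful
   (positions >= ell are never read, thanks to the padding below). *)
Definition signal (c : nat) := 'I_c -> nat -> R.

Definition conv_layer (cin cout : nat) :=
  (('I_cout -> 'I_cin -> 'I_k -> R) * ('I_cout -> R))%type.

Definition pad (c : nat) (z : signal c) (ch : 'I_c) (m : nat) : R :=
  if (k./2 <= m)%N && (m - k./2 < ell)%N then z ch (m - k./2)%N else 0.

Definition conv (cin cout : nat) (L : conv_layer cin cout) (z : signal cin)
  : signal cout :=
  fun o p => L.2 o + \sum_(c < cin) \sum_(q < k) L.1 o c q * pad z c (p + q).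

Definition relu_sig (c : nat) (z : signal c) : signal c :=
  fun ch p => Num.max (z ch p) 0.

(* apply n hidden layers Cs 0, ..., Cs (n-1) (these are C_2, ..., C_{n+1}). *)
Fixpoint run_hidden (h : nat) (Cs : nat -> conv_layer h h) (n : nat)
  (z : signal h) : signal h :=
  match n with
  | 0 => z
  | n'.+1 => relu_sig (conv (Cs n') (run_hidden Cs n' z))
  end.

(* The depth-d normalization-free CNN:
   z1 = C_in x, z_i = relu (C_i z_{i-1}) for i = 2..d-1, f x = C_out z_{d-1}.
   Hidden layer C_i is [Cs (i-2)].  [cnn_coord ... x i] is f_i(x), i 1-based. *)
Definition cnn_coord (h d : nat) (Cin : conv_layer 1 h)
  (Cs : nat -> conv_layer h h) (Cout : conv_layer h 1)
  (x : ell.-tuple R) (i : nat) : R :=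
  let x0 : signal 1 := fun _ p => nth 0 x p in
  conv Cout (run_hidden Cs (d - 2) (conv Cin x0)) ord0 (i - 1)%N.

End CNN.

Local Open Scope ereal_scope.

(* Expectation of g(x) for x ~ N(0, I_n), as the iterated integral of g
   against n copies of the standard normal law on R (Fubini). *)
Fixpoint gauss_expect (R : realType) (n : nat)
  : (n.-tuple R -> R) -> \bar R :=
  match n return (n.-tuple R -> R) -> \bar R with
  | 0 => fun g => (g [tuple])%:E
  | n'.+1 => fun g =>
      \int[normal_prob 0 1]_(t in [set: R])
         gauss_expect (fun x : n'.-tuple R => g (cons_tuple t x))
  end.

(* Main.v *)
Require Import Defs.
From HB Require Import structures.
From mathcomp Require Import all_boot all_order all_algebra.
From mathcomp Require Import all_classical all_reals all_analysis.
From mathcomp Require Import zify.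
Import Order.TTheory GRing.Theory Num.Theory.
Local Open Scope ring_scope.

Section Local.
Variables (R : realType) (ell k : nat).
Hypothesis k_odd : odd k.

Definition agree {c} (w : nat) (z z' : signal R c) (a a' : nat) :=
  forall ch j, (j <= 2 * w)%N -> z ch (a + j)%N = z' ch (a' + j)%N.

Lemma hk : k = (2 * k./2 + 1)%N.
Proof. have := odd_double_half k. rewrite k_odd -muln2. lia. Qed.

Lemma conv_agree cin cout (L : conv_layer R k cin cout) (z z' : signal R cin) w a a' b b' :
  (a + 2 * (w + k./2) < ell)%N -> (a' + 2 * (w + k./2) < ell)%N ->
  b = (a + k./2)%N -> b' = (a' + k./2)%N ->
  agree (w + k./2) z z' a a' ->
  agree w (Defs.conv ell L z) (Defs.conv ell L z') b b'.
Proof.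
move=> ha ha' -> -> H o j hj; rewrite /Defs.conv; congr (_ + _).
apply: eq_bigr => c _; apply: eq_bigr => q _; congr (_ * _).
have hq := ltn_ord q. have e := hk.
rewrite /pad.
have -> : (k./2 <= a + k./2 + j + q)%N = true by lia.
have -> : (k./2 <= a' + k./2 + j + q)%N = true by lia.
have -> : (a + k./2 + j + q - k./2 = a + (j + q))%N by lia.
have -> : (a' + k./2 + j + q - k./2 = a' + (j + q))%N by lia.
have -> : (a + (j + q) < ell)%N = true by lia.
have -> : (a' + (j + q) < ell)%N = true by lia.
apply: H; lia.
Qed.

Lemma relu_agree c (z z' : signal R c) w a a' :
  agree w z z' a a' -> agree w (relu_sig z) (relu_sig z') a a'.
Proof. by move=> H ch j hj; rewrite /relu_sig H. Qed.

Lemma hidden_agree h (Cs : nat -> conv_layer R k h h) n : forall z z' w a a',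
  (a + 2 * (w + n * k./2) < ell)%N -> (a' + 2 * (w + n * k./2) < ell)%N ->
  agree (w + n * k./2) z z' a a' ->
  agree w (run_hidden ell Cs n z) (run_hidden ell Cs n z')
    (a + n * k./2) (a' + n * k./2).
Proof.
elim: n => [|n IH] z z' w a a' ha ha' H /=.
  move=> ch j hj; rewrite !addn0; have := H ch j; rewrite mul0n addn0 => ->//.
apply: relu_agree.
apply: (@conv_agree _ _ _ _ _ w (a + n * k./2) (a' + n * k./2)); try lia.
apply: IH; try lia.
move=> ch j hj; apply: H; lia.
Qed.

Lemma cnn_agree h d (Cin : conv_layer R k 1 h) (Cs : nat -> conv_layer R k h h)
  (Cout : conv_layer R k h 1) (x x' : ell.-tuple R) a a' i i' :
  (2 <= d)%N ->
  (a + 2 * (d * k./2) < ell)%N -> (a' + 2 * (d * k./2) < ell)%N ->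
  i = (a + d * k./2 + 1)%N -> i' = (a' + d * k./2 + 1)%N ->
  (forall j, (j <= 2 * (d * k./2))%N -> nth 0 x (a + j) = nth 0 x' (a' + j)) ->
  cnn_coord d Cin Cs Cout x i = cnn_coord d Cin Cs Cout x' i'.
Proof.
move=> hd ha ha' -> -> H; rewrite /cnn_coord.
remember (k./2) as r eqn:Er.
have E1 : ((d - 1) * r + r = d * r)%N by rewrite -mulSnr; have -> : (d - 1).+1 = d by lia.
have E2 : (r + (d - 2) * r = (d - 1) * r)%N by rewrite -mulSn; have -> : (d - 2).+1 = (d - 1)%N by lia.
have E3 : (r <= d * r)%N by rewrite leq_pmull //; lia.
have A1 : agree (d * r) (fun (_ : 'I_1) p => nth 0 x p)
   (fun (_ : 'I_1) p => nth 0 x' p) a a'.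
  by move=> ch j hj; apply: H.
have A2 : agree ((d - 1) * r) (Defs.conv ell Cin (fun (_ : 'I_1) p => nth 0 x p))
   (Defs.conv ell Cin (fun (_ : 'I_1) p => nth 0 x' p)) (a + r) (a' + r).
  apply: (@conv_agree _ _ Cin _ _ _ a a'); rewrite -Er ?E1; try lia.
  exact: A1.
have A3 := @hidden_agree h Cs (d - 2) _ _ r (a + r) (a' + r).
rewrite -Er E2 in A3; have {}A3 := A3 _ _ ltac:(lia) ltac:(lia) A2.
have A4 : agree 0 (Defs.conv ell Cout (run_hidden ell Cs (d - 2)
     (Defs.conv ell Cin (fun (_ : 'I_1) p => nth 0 x p))))
   (Defs.conv ell Cout (run_hidden ell Cs (d - 2)
     (Defs.conv ell Cin (fun (_ : 'I_1) p => nth 0 x' p))))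
   (a + d * r) (a' + d * r).
  apply: (@conv_agree _ _ Cout _ _ 0 (a + r + (d - 2) * r) (a' + r + (d - 2) * r)); rewrite -Er; try lia.
  by rewrite add0n.
have := A4 ord0 0%N (leqnn _); rewrite !addn0.
have -> : (a + d * r + 1 - 1 = a + d * r)%N by lia.
have -> : (a' + d * r + 1 - 1 = a' + d * r)%N by lia.
by [].
Qed.

End Local.

Lemma gauss_window (R : realType) n : forall (g : n.-tuple R -> R) m
  (G : m.-tuple R -> R) a, (a + m <= n)%N ->
  (forall (x : n.-tuple R) (y : m.-tuple R),
     (forall i, (i < m)%N -> nth 0 y i = nth 0 x (a + i)) -> g x = G y) ->
  gauss_expect g = gauss_expect G.
Proof.
elim: n => [|n IH] g m G a Ham H.
  have m0 : m = 0%N by lia.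
  subst m => /=; by rewrite (H [tuple] [tuple]).
case: m G Ham H => [|m'] G Ham H.
  rewrite [LHS]/=.
  have -> : (fun t => gauss_expect (fun x : n.-tuple R => g (cons_tuple t x)))
     = cst (gauss_expect G).
    apply/funext => t /=; apply: (IH _ 0%N G 0%N) => //.
    by move=> x y _; apply: H.
  by rewrite integral_cst //= probability_setT mule1.
case: a Ham H => [|a] Ham H.
  rewrite /=; congr (integral _ _ _); apply/funext => t.
  apply: (IH _ m' _ 0%N) => //.
  move=> x y Hxy; apply: H => -[|i] //= hi; exact: Hxy.
rewrite [LHS]/=.
have -> : (fun t => gauss_expect (fun x : n.-tuple R => g (cons_tuple t x)))
   = cst (gauss_expect G).
  apply/funext => t /=; apply: (IH _ m'.+1 G a) => //.
  move=> x y Hxy; apply: H => i hi /=; exact: Hxy.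
by rewrite integral_cst //= probability_setT mule1.
Qed.

Lemma nth_mktuple_nat (T : Type) n (F : nat -> T) x0 i : (i < n)%N ->
  nth x0 [tuple F (val j) | j < n] i = F i.
Proof. move=> hi; exact: (nth_mktuple (fun j : 'I_n => F (val j)) x0 (Ordinal hi)). Qed.

Theorem propositionC1 (R : realType) (ell d h k : nat)
  (k_odd : odd k) (d_ge2 : (2 <= d)%N)
  (Cin : conv_layer R k 1 h) (Cs : nat -> conv_layer R k h h)
  (Cout : conv_layer R k h 1)
  (hR : ((k./2 * d)%:R : R) < ell%:R / 2 - 2) :
  forall istar : nat, (k./2 * d + 1 <= istar <= ell - k./2 * d - 1)%N ->
    exists j : nat, [/\ (1 <= j <= ell)%N, j <> istar &
      gauss_expect (fun x => @cnn_coord R ell k h d Cin Cs Cout x istar)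
      = gauss_expect (fun x => @cnn_coord R ell k h d Cin Cs Cout x j)].
Proof.
move=> istar /andP [h1 h2].
rewrite (mulnC k./2 d) in h1 h2 *.
exists istar.+1; split; [lia|lia|].
set D := (d * k./2)%N in h1 h2 *.
set a := (istar - 1 - D)%N.
pose F (y : (2 * D + 1).-tuple R) (i : nat) : R :=
  if (a <= i < a + (2 * D + 1))%N then nth 0 y (i - a) else 0.
pose embed (y : (2 * D + 1).-tuple R) : ell.-tuple R :=
  [tuple F y (val i) | i < ell].
pose G y := @cnn_coord R ell k h d Cin Cs Cout (embed y) istar.
have Hemb : forall y j, (j <= 2 * D)%N -> nth 0 (embed y) (a + j) = nth 0 y j.
  move=> y j hj; rewrite /embed (@nth_mktuple_nat _ _ (F y)); last by lia.
  rewrite /F.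
  have -> : (a <= a + j < a + (2 * D + 1))%N = true by lia.
  by rewrite addKn.
transitivity (gauss_expect G).
  apply: (@gauss_window R ell _ (2 * D + 1) G a); first by lia.
  move=> x y Hxy.
  apply: (@cnn_agree R ell k k_odd h d Cin Cs Cout x (embed y) a a istar istar
    d_ge2); rewrite -/D; try lia.
  by move=> j hj; rewrite Hemb // Hxy //; lia.
symmetry.
apply: (@gauss_window R ell _ (2 * D + 1) G a.+1); first by lia.
move=> x y Hxy.
apply: (@cnn_agree R ell k k_odd h d Cin Cs Cout x (embed y) a.+1 a istar.+1 istar
    d_ge2); rewrite -/D; try lia.
by move=> j hj; rewrite Hemb // Hxy //; lia.
Qed.
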